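(* The theory $\mathsf{Seq}$ is $\Sigma$-complete: for every $\Sigma$-sentence $\phi$ of $\mathcal{L}$, if $\mathfrak{S}\models\phi$ then $\mathsf{Seq}\vdash\phi$.
   Context: $\mathcal{L}=\{e,\vdash,\circ\}$ with $e$ a constant and $\vdash$ (infix), $\circ$ binary function symbols. $\mathsf{Seq}$ has axioms: ($\mathsf{Seq}_1$) $\forall xy[x\vdash y\neq e]$; ($\mathsf{Seq}_2$) $\forall x_1x_2y_1y_2[x_1\vdash x_2=y_1\vdash y_2\rightarrow(x_1=y_1\wedge x_2=y_2)]$; ($\mathsf{Seq}_3$) $\forall x[x\circ e=x]$; ($\mathsf{Seq}_4$) $\forall xyz[x\circ(y\vdash z)=(x\circ y)\vdash z]$; ($\mathsf{Seq}_5$) $\forall x[x=e\vee\exists yz[x=y\vdash z]]$. Sequences: $()$ is a sequence and $(s_1,\ldots,s_n)$ ($n>0$) is a sequence whenever the $s_i$ are. The standard structure $\mathfrak{S}$ has universe all sequences, $e^{\mathfrak{S}}=()$, $(s_1,\ldots,s_n)\vdash^{\mathfrak{S}}t=(s_1,\ldots,s_n,t)$, $\circ^{\mathfrak{S}}$ concatenation. $s\sqsubseteq t$ abbreviates $\exists y[s\circ y=t]$, and $\forall x\sqsubseteq t[\phi]$ abbreviates $\forall x[x\sqsubseteq t\rightarrow\phi]$. $\Sigma$-formulas are defined inductively: atomic formulas and their negations; $s\sqsubseteq t$ and $\neg(s\sqsubseteq t)$ for terms $s,t$; conjunctions and disjunctions of $\Sigma$-formulas; $\exists x[\phi]$ for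 $\Sigma$-formulas $\phi$; $\forall x\sqsubseteq t[\phi]$ for $\Sigma$-formulas $\phi$ and terms $t$ not containing $x$. *)

(* Defs.v *)
From Stdlib Require Import List Arith.
Import ListNotations.

Inductive term : Type :=
| var : nat -> term
| te : term
| tturn : term -> term -> term
| tconc : term -> term -> term.

Inductive form : Type :=
| Fal : form
| Eq : term -> term -> form
| Imp : form -> form -> form
| And : form -> form -> form
| Or : form -> form -> form
| All : form -> form
| Ex : form -> form.

Definition Neg (phi : form) : form := Imp phi Fal.

Definition scons {X : Type} (x : X) (f : nat -> X) (n : nat) : X :=
  match n with 0 => x | S k => f k end.

Fixpoint subst_term (sigma : nat -> term) (t : term) : term :=
  match t with
  | var n => sigma n
  | te => te
  | tturn a b => tturn (subst_term sigma a) (subst_term sigma b)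
  | tconc a b => tconc (subst_term sigma a) (subst_term sigma b)
  end.

Definition up (sigma : nat -> term) : nat -> term :=
  scons (var 0) (fun n => subst_term (fun k => var (S k)) (sigma n)).

Fixpoint subst_form (sigma : nat -> term) (phi : form) : form :=
  match phi with
  | Fal => Fal
  | Eq s t => Eq (subst_term sigma s) (subst_term sigma t)
  | Imp a b => Imp (subst_form sigma a) (subst_form sigma b)
  | And a b => And (subst_form sigma a) (subst_form sigma b)
  | Or a b => Or (subst_form sigma a) (subst_form sigma b)
  | All a => All (subst_form (up sigma) a)
  | Ex a => Ex (subst_form (up sigma) a)
  end.

Definition shift_t (t : term) : term := subst_term (fun n => var (S n)) t.
Definition shift_f (phi : form) : form := subst_form (fun n => var (S n)) phi.

Definition inst (t : term) (phi : form) : form := subst_form (scons t var) phi.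

Fixpoint bounded_t (n : nat) (t : term) : Prop :=
  match t with
  | var k => k < n
  | te => True
  | tturn a b => bounded_t n a /\ bounded_t n b
  | tconc a b => bounded_t n a /\ bounded_t n b
  end.

Fixpoint bounded (n : nat) (phi : form) : Prop :=
  match phi with
  | Fal => True
  | Eq s t => bounded_t n s /\ bounded_t n t
  | Imp a b => bounded n a /\ bounded n b
  | And a b => bounded n a /\ bounded n b
  | Or a b => bounded n a /\ bounded n b
  | All a => bounded (S n) a
  | Ex a => bounded (S n) a
  end.

Definition sentence (phi : form) : Prop := bounded 0 phi.

Inductive nd : list form -> form -> Prop :=
| ndA G phi : In phi G -> nd G phi
| ndExp G phi : nd G Fal -> nd G phi
| ndDN G phi : nd G (Neg (Neg phi)) -> nd G phi
| ndII G phi psi : nd (phi :: G) psi -> nd G (Imp phi psi)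
| ndIE G phi psi : nd G (Imp phi psi) -> nd G phi -> nd G psi
| ndCI G phi psi : nd G phi -> nd G psi -> nd G (And phi psi)
| ndCE1 G phi psi : nd G (And phi psi) -> nd G phi
| ndCE2 G phi psi : nd G (And phi psi) -> nd G psi
| ndDI1 G phi psi : nd G phi -> nd G (Or phi psi)
| ndDI2 G phi psi : nd G psi -> nd G (Or phi psi)
| ndDE G phi psi th :
    nd G (Or phi psi) -> nd (phi :: G) th -> nd (psi :: G) th -> nd G th
| ndAllI G phi : nd (map shift_f G) phi -> nd G (All phi)
| ndAllE G phi t : nd G (All phi) -> nd G (inst t phi)
| ndExI G phi t : nd G (inst t phi) -> nd G (Ex phi)
| ndExE G phi psi :
    nd G (Ex phi) -> nd (phi :: map shift_f G) (shift_f psi) -> nd G psi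
| ndRefl G t : nd G (Eq t t)
| ndLeib G phi s t : nd G (Eq s t) -> nd G (inst s phi) -> nd G (inst t phi).

Definition v := var.
(* Seq1: forall x y, x |- y <> e *)
Definition Seq1 : form := All (All (Neg (Eq (tturn (v 1) (v 0)) te))).
(* Seq2: forall x1 x2 y1 y2, x1|-x2 = y1|-y2 -> x1=y1 /\ x2=y2 *)
Definition Seq2 : form :=
  All (All (All (All
    (Imp (Eq (tturn (v 3) (v 2)) (tturn (v 1) (v 0)))
         (And (Eq (v 3) (v 1)) (Eq (v 2) (v 0))))))).
(* Seq3: forall x, x o e = x *)
Definition Seq3 : form := All (Eq (tconc (v 0) te) (v 0)).
(* Seq4: forall x y z, x o (y |- z) = (x o y) |- z *)
Definition Seq4 : form :=
  All (All (All (Eq (tconc (v 2) (tturn (v 1) (v 0)))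
                    (tturn (tconc (v 2) (v 1)) (v 0))))).
(* Seq5: forall x, x = e \/ exists y z, x = y |- z *)
Definition Seq5 : form :=
  All (Or (Eq (v 0) te) (Ex (Ex (Eq (v 2) (tturn (v 1) (v 0)))))).

Definition Seq_axiom (phi : form) : Prop :=
  phi = Seq1 \/ phi = Seq2 \/ phi = Seq3 \/ phi = Seq4 \/ phi = Seq5.

Definition Seq_proves (phi : form) : Prop :=
  exists G, (forall psi, In psi G -> Seq_axiom psi) /\ nd G phi.

(* s [= t  abbreviates  exists y [ s o y = t ] *)
Definition sqsub (s t : term) : form :=
  Ex (Eq (tconc (shift_t s) (var 0)) (shift_t t)).
(* forall x [= t [phi]  abbreviates  forall x [ x [= t -> phi ];
   in de Bruijn form t is shifted, so x (index 0) does not occur in t *)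
Definition ball (t : term) (phi : form) : form :=
  All (Imp (sqsub (var 0) (shift_t t)) phi).

Inductive Sigma : form -> Prop :=
| Sig_eq s t : Sigma (Eq s t)
| Sig_neq s t : Sigma (Neg (Eq s t))
| Sig_sub s t : Sigma (sqsub s t)
| Sig_nsub s t : Sigma (Neg (sqsub s t))
| Sig_and phi psi : Sigma phi -> Sigma psi -> Sigma (And phi psi)
| Sig_or phi psi : Sigma phi -> Sigma psi -> Sigma (Or phi psi)
| Sig_ex phi : Sigma phi -> Sigma (Ex phi)
| Sig_ball t phi : Sigma phi -> Sigma (ball t phi).

Inductive sq : Type := Sq : list sq -> sq.

Definition sq_e : sq := Sq [].
Definition sq_turn (a b : sq) : sq :=
  match a with Sq l => Sq (l ++ [b]) end.
Definition sq_conc (a b : sq) : sq :=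
  match a, b with Sq l, Sq l' => Sq (l ++ l') end.

Fixpoint eval (rho : nat -> sq) (t : term) : sq :=
  match t with
  | var n => rho n
  | te => sq_e
  | tturn a b => sq_turn (eval rho a) (eval rho b)
  | tconc a b => sq_conc (eval rho a) (eval rho b)
  end.

Fixpoint sat (rho : nat -> sq) (phi : form) : Prop :=
  match phi with
  | Fal => False
  | Eq s t => eval rho s = eval rho t
  | Imp a b => sat rho a -> sat rho b
  | And a b => sat rho a /\ sat rho b
  | Or a b => sat rho a \/ sat rho b
  | All a => forall x : sq, sat (scons x rho) a
  | Ex a => exists x : sq, sat (scons x rho) a
  end.

(* S |= phi (for a sentence the environment is irrelevant) *)
Definition S_models (phi : form) : Prop := forall rho, sat rho phi.

(* Main.v *)
Require Import Defs.
From Stdlib Require Import List Arith Lia Classical.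
Import ListNotations.

Lemma subst_term_ext s1 s2 t : (forall n, s1 n = s2 n) -> subst_term s1 t = subst_term s2 t.
Proof. intro H; induction t; simpl; congruence. Qed.

Lemma up_ext s1 s2 : (forall n, s1 n = s2 n) -> forall n, up s1 n = up s2 n.
Proof. intros H [|n]; simpl; [reflexivity| now rewrite H]. Qed.

Lemma subst_form_ext phi : forall s1 s2, (forall n, s1 n = s2 n) -> subst_form s1 phi = subst_form s2 phi.
Proof.
  induction phi; intros s1 s2 H; simpl; f_equal; try (apply subst_term_ext; assumption); auto;
  apply IHphi; apply up_ext; assumption.
Qed.

Lemma subst_term_comp sigma tau t : subst_term tau (subst_term sigma t) = subst_term (fun n => subst_term tau (sigma n)) t.
Proof. induction t; simpl; congruence. Qed.

Lemma subst_term_id' sigma t : (forall n, sigma n = var n) -> subst_term sigma t = t.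
Proof. intro H; induction t; simpl; congruence. Qed.

Lemma up_comp sigma tau n : subst_term (up tau) (up sigma n) = up (fun n => subst_term tau (sigma n)) n.
Proof.
  destruct n; simpl; [reflexivity|].
  rewrite !subst_term_comp. apply subst_term_ext. intro k. simpl. reflexivity.
Qed.

Lemma subst_form_comp phi : forall sigma tau, subst_form tau (subst_form sigma phi) = subst_form (fun n => subst_term tau (sigma n)) phi.
Proof.
  induction phi; intros sigma tau; simpl; f_equal; try apply subst_term_comp; auto;
  rewrite IHphi; apply subst_form_ext; intro n; apply up_comp.
Qed.

Lemma subst_form_id' phi : forall sigma, (forall n, sigma n = var n) -> subst_form sigma phi = phi.
Proof.
  induction phi; intros sigma H; simpl; f_equal; try (apply subst_term_id'; auto); auto;
  apply IHphi; intros [|n]; simpl; try reflexivity; rewrite H; reflexivity.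
Qed.

Lemma inst_shift_t u t : subst_term (scons u var) (shift_t t) = t.
Proof. unfold shift_t. rewrite subst_term_comp. apply subst_term_id'. reflexivity. Qed.

Lemma inst_up t sigma phi : inst t (subst_form (up sigma) phi) = subst_form (scons t sigma) phi.
Proof.
  unfold inst. rewrite subst_form_comp. apply subst_form_ext.
  intros [|n]; simpl; [reflexivity|]. apply (inst_shift_t t (sigma n)).
Qed.

Lemma bounded_t_subst n t sigma : bounded_t n t -> (forall k, k < n -> sigma k = var k) -> subst_term sigma t = t.
Proof. intros Hb H; induction t; simpl in *; try f_equal; intuition. Qed.

Lemma bounded_subst phi : forall n sigma, bounded n phi -> (forall k, k < n -> sigma k = var k) -> subst_form sigma phi = phi.
Proof.
  induction phi; intros n sigma Hb H; simpl in *; try f_equal;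
  try (eapply bounded_t_subst; eauto; tauto); try (eapply IHphi1; eauto; tauto);
  try (eapply IHphi2; eauto; tauto);
  try (eapply IHphi; [eassumption|]; intros [|k] Hk; simpl; [reflexivity| rewrite H; [reflexivity| lia]]).
all: reflexivity.
Qed.

Lemma eval_ext r1 r2 t : (forall n, r1 n = r2 n) -> eval r1 t = eval r2 t.
Proof. intro H; induction t; simpl; congruence. Qed.

Lemma eval_subst rho sigma t : eval rho (subst_term sigma t) = eval (fun n => eval rho (sigma n)) t.
Proof. induction t; simpl; congruence. Qed.

Lemma eval_shift x rho t : eval (scons x rho) (shift_t t) = eval rho t.
Proof. unfold shift_t. rewrite eval_subst. apply eval_ext. reflexivity. Qed.

Fixpoint num (s : sq) : term := match s with Sq l => fold_left (fun acc x => tturn acc (num x)) l te end.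
Definition numl (l : list sq) : term := fold_left (fun acc x => tturn acc (num x)) l te.
Lemma num_Sq l : num (Sq l) = numl l. Proof. reflexivity. Qed.
Lemma numl_snoc l c : numl (l ++ [c]) = tturn (numl l) (num c).
Proof. unfold numl. rewrite fold_left_app. reflexivity. Qed.

Fixpoint sq_ind' (P : sq -> Prop) (H : forall l, Forall P l -> P (Sq l)) (s : sq) : P s :=
  match s with Sq l => H l ((fix f (l : list sq) : Forall P l :=
     match l with [] => Forall_nil P | x :: l' => Forall_cons x (sq_ind' P H x) (f l') end) l) end.

Lemma snoc_cases {A} (l : list A) : l = [] \/ exists l0 c, l = l0 ++ [c].
Proof. destruct l using rev_ind; [left; reflexivity| right; eauto]. Qed.

Lemma num_closed s : forall sigma, subst_term sigma (num s) = num s.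
Proof.
  induction s using sq_ind'. intro sigma. rewrite num_Sq.
  induction l using rev_ind; [reflexivity|].
  apply Forall_app in H as [H1 H2]. inversion H2; subst.
  rewrite numl_snoc. simpl. rewrite IHl, H3; auto.
Qed.

Lemma eval_num s : forall rho, eval rho (num s) = s.
Proof.
  induction s using sq_ind'. intro rho. rewrite num_Sq.
  induction l using rev_ind; [reflexivity|].
  apply Forall_app in H as [H1 H2]. inversion H2; subst.
  rewrite numl_snoc. simpl. rewrite IHl, H3; auto.
Qed.

Definition nsub (rho : nat -> sq) : nat -> term := fun n => num (rho n).
Arguments nsub : simpl never.

Lemma nsub_closed rho t tau : subst_term tau (subst_term (nsub rho) t) = subst_term (nsub rho) t.
Proof. rewrite subst_term_comp. apply subst_term_ext. intro n. apply num_closed. Qed.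

Lemma weak G phi : nd G phi -> forall G', incl G G' -> nd G' phi.
Proof.
  induction 1; intros G' Hi.
  - apply ndA; auto.
  - apply ndExp; auto.
  - apply ndDN; auto.
  - apply ndII; apply IHnd; apply incl_cons; [left; reflexivity| apply incl_tl; auto].
  - eapply ndIE; eauto.
  - apply ndCI; auto.
  - eapply ndCE1; eauto.
  - eapply ndCE2; eauto.
  - apply ndDI1; auto.
  - apply ndDI2; auto.
  - eapply ndDE; [eauto| apply IHnd2| apply IHnd3]; apply incl_cons; try (left; reflexivity); apply incl_tl; auto.
  - apply ndAllI; apply IHnd; apply incl_map; auto.
  - apply ndAllE; auto.
  - eapply ndExI; eauto.
  - eapply ndExE; [eauto|]. apply IHnd2. apply incl_cons; [left; reflexivity| apply incl_tl; apply incl_map; auto].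
  - apply ndRefl.
  - eapply ndLeib; eauto.
Qed.

Lemma weak1 G phi psi : nd G phi -> nd (psi :: G) phi.
Proof. intro H; eapply weak; [exact H| apply incl_tl, incl_refl]. Qed.

Lemma nd_conv G a b : nd G a -> a = b -> nd G b.
Proof. intros H ->; exact H. Qed.

Definition AX G := forall psi, Seq_axiom psi -> In psi G.

Lemma AX_cons G phi : AX G -> AX (phi :: G).
Proof. intros H psi Hp; right; auto. Qed.

Lemma AX_shift G : AX G -> AX (map shift_f G).
Proof.
  intros H psi Hp. assert (E : shift_f psi = psi)
    by (destruct Hp as [->|[->|[->|[->| ->]]]]; reflexivity).
  rewrite <- E. apply in_map. auto.
Qed.

Lemma AX_A : AX [Seq1; Seq2; Seq3; Seq4; Seq5].
Proof. intros psi Hp; destruct Hp as [->|[->|[->|[->| ->]]]]; simpl; tauto. Qed.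

Lemma shift_f_Eq s t : shift_f (Eq s t) = Eq (shift_t s) (shift_t t).
Proof. reflexivity. Qed.

Lemma eq_sym G s t : nd G (Eq s t) -> nd G (Eq t s).
Proof.
  intro H. eapply nd_conv.
  - apply (ndLeib G (Eq (var 0) (shift_t s)) s t H).
    eapply nd_conv; [apply ndRefl|]. unfold inst; simpl. rewrite inst_shift_t. reflexivity.
  - unfold inst; simpl. rewrite inst_shift_t. reflexivity.
Qed.

Lemma eq_trans G s t u : nd G (Eq s t) -> nd G (Eq t u) -> nd G (Eq s u).
Proof.
  intros H1 H2. eapply nd_conv.
  - apply (ndLeib G (Eq (shift_t s) (var 0)) t u H2).
    eapply nd_conv; [exact H1|]. unfold inst; simpl. rewrite inst_shift_t. reflexivity.
  - unfold inst; simpl. rewrite inst_shift_t. reflexivity.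
Qed.

Lemma eq_cong G s t c : nd G (Eq s t) ->
  nd G (Eq (subst_term (scons s var) c) (subst_term (scons t var) c)).
Proof.
  intro H. eapply nd_conv.
  - apply (ndLeib G (Eq (shift_t (subst_term (scons s var) c)) c) s t H).
    eapply nd_conv; [apply ndRefl|]. unfold inst; simpl. rewrite inst_shift_t. reflexivity.
  - unfold inst; simpl. rewrite inst_shift_t. reflexivity.
Qed.

Lemma cong_turn G a a' b b' : nd G (Eq a a') -> nd G (Eq b b') -> nd G (Eq (tturn a b) (tturn a' b')).
Proof.
  intros H1 H2. eapply eq_trans.
  - eapply nd_conv; [apply (eq_cong G a a' (tturn (var 0) (shift_t b)) H1)|].
    simpl. rewrite inst_shift_t. reflexivity.
  - eapply nd_conv; [apply (eq_cong G b b' (tturn (shift_t a') (var 0)) H2)|].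
    simpl. rewrite !inst_shift_t. reflexivity.
Qed.

Lemma cong_conc G a a' b b' : nd G (Eq a a') -> nd G (Eq b b') -> nd G (Eq (tconc a b) (tconc a' b')).
Proof.
  intros H1 H2. eapply eq_trans.
  - eapply nd_conv; [apply (eq_cong G a a' (tconc (var 0) (shift_t b)) H1)|].
    simpl. rewrite inst_shift_t. reflexivity.
  - eapply nd_conv; [apply (eq_cong G b b' (tconc (shift_t a') (var 0)) H2)|].
    simpl. rewrite !inst_shift_t. reflexivity.
Qed.

Lemma refl' G t : nd G (Eq t t). Proof. apply ndRefl. Qed.

Ltac simp_inst := unfold shift_t; repeat rewrite subst_term_comp;
  repeat match goal with |- context [subst_term ?s ?t] =>
     rewrite (subst_term_id' s t) by (intro; reflexivity) end.

Lemma ax1 G a b : AX G -> nd G (Eq (tturn a b) te) -> nd G Fal.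
Proof.
  intros HA H. assert (HS : In Seq1 G) by (apply HA; left; reflexivity).
  eapply ndIE; [|exact H].
  eapply nd_conv; [apply (ndAllE _ _ b (ndAllE _ _ a (ndA _ _ HS)))|].
  unfold inst; simpl. simp_inst. reflexivity.
Qed.

Lemma ax2 G a b c d : AX G -> nd G (Eq (tturn a b) (tturn c d)) -> nd G (Eq a c) /\ nd G (Eq b d).
Proof.
  intros HA H. assert (HS : In Seq2 G) by (apply HA; right; left; reflexivity).
  assert (H' : nd G (And (Eq a c) (Eq b d))).
  { eapply ndIE; [|exact H].
    eapply nd_conv; [apply (ndAllE _ _ d (ndAllE _ _ c (ndAllE _ _ b (ndAllE _ _ a (ndA _ _ HS)))))|].
    unfold inst; simpl. simp_inst. reflexivity. }
  split; [eapply ndCE1| eapply ndCE2]; exact H'.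
Qed.

Lemma ax3 G a : AX G -> nd G (Eq (tconc a te) a).
Proof.
  intros HA. assert (HS : In Seq3 G) by (apply HA; right; right; left; reflexivity).
  eapply nd_conv; [apply (ndAllE _ _ a (ndA _ _ HS))|]. reflexivity.
Qed.

Lemma ax4 G a b c : AX G -> nd G (Eq (tconc a (tturn b c)) (tturn (tconc a b) c)).
Proof.
  intros HA. assert (HS : In Seq4 G) by (apply HA; right; right; right; left; reflexivity).
  eapply nd_conv; [apply (ndAllE _ _ c (ndAllE _ _ b (ndAllE _ _ a (ndA _ _ HS))))|].
  unfold inst; simpl. simp_inst. reflexivity.
Qed.

Lemma ax5 G a : AX G -> nd G (Or (Eq a te) (Ex (Ex (Eq (shift_t (shift_t a)) (tturn (var 1) (var 0)))))).
Proof.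
  intros HA. assert (HS : In Seq5 G) by (apply HA; right; right; right; right; reflexivity).
  eapply nd_conv; [apply (ndAllE _ _ a (ndA _ _ HS))|]. reflexivity.
Qed.

Lemma elim5 G x psi : AX G -> nd (Eq x te :: G) psi ->
  nd (Eq (shift_t (shift_t x)) (tturn (var 1) (var 0)) :: map shift_f (map shift_f G)) (shift_f (shift_f psi)) ->
  nd G psi.
Proof.
  intros HA H1 H2. eapply ndDE; [apply (ax5 G x HA)| exact H1|].
  eapply ndExE; [apply ndA; left; reflexivity|].
  eapply ndExE; [apply ndA; left; reflexivity|].
  eapply weak; [exact H2|]. apply incl_cons; [left; reflexivity|].
  apply incl_tl. apply incl_map. apply incl_tl. apply incl_map. apply incl_tl, incl_refl.
Qed.

Lemma In_shift2 E G P : In E G -> In (shift_f (shift_f E)) (P :: map shift_f (map shift_f G)).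
Proof. intro H; right; apply in_map, in_map, H. Qed.

Lemma AX2 G P : AX G -> AX (P :: map shift_f (map shift_f G)).
Proof. intro; apply AX_cons, AX_shift, AX_shift; auto. Qed.

Lemma shift_num s : shift_t (num s) = num s.
Proof. apply num_closed. Qed.
Lemma shift_numl l : shift_t (numl l) = numl l.
Proof. apply (num_closed (Sq l)). Qed.

Lemma numl_closed l sigma : subst_term sigma (numl l) = numl l.
Proof. apply (num_closed (Sq l)). Qed.

Ltac shsimp := unfold shift_f, inst; cbn [subst_form subst_term scons]; rewrite ?num_closed, ?numl_closed.

Lemma conc_num' G la l : AX G -> nd G (Eq (tconc (numl la) (numl l)) (numl (la ++ l))).
Proof.
  intro HA. induction l using rev_ind.
  - rewrite app_nil_r. apply ax3; auto.
  - rewrite numl_snoc, app_assoc, numl_snoc.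
    eapply eq_trans; [apply ax4; auto|]. apply cong_turn; [exact IHl| apply refl'].
Qed.

Definition snum := nsub.

Lemma term_num G rho t : AX G -> nd G (Eq (subst_term (nsub rho) t) (num (eval rho t))).
Proof.
  intro HA. induction t; simpl.
  - apply refl'.
  - apply refl'.
  - destruct (eval rho t1) as [l1]. cbn [sq_turn]. rewrite num_Sq, numl_snoc.
    apply cong_turn; auto.
  - destruct (eval rho t1) as [l1], (eval rho t2) as [l2]. cbn [sq_conc].
    eapply eq_trans; [apply cong_conc; [exact IHt1| exact IHt2]|]. rewrite !num_Sq. apply conc_num'; auto.
Qed.

Lemma num_neq s : forall s', s <> s' -> forall G, AX G -> nd G (Eq (num s) (num s')) -> nd G Fal.
Proof.
  induction s as [l Hf] using sq_ind'. revert Hf.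
  induction l as [|c l IH] using rev_ind; intros Hf [l'] Hne G HA H; rewrite !num_Sq in H.
  - destruct (snoc_cases l') as [->|[l0 [c ->]]]; [congruence|].
    rewrite numl_snoc in H. apply (ax1 G (numl l0) (num c)); auto. apply eq_sym; auto.
  - apply Forall_app in Hf as [Hf1 Hf2]. inversion Hf2; subst.
    rewrite numl_snoc in H.
    destruct (snoc_cases l') as [->|[l0 [c' ->]]].
    + apply (ax1 G (numl l) (num c)); auto.
    + rewrite numl_snoc in H. apply ax2 in H as [Ha Hb]; auto.
      destruct (classic (Sq l = Sq l0)) as [E|E].
      * destruct (classic (c = c')) as [E'|E']; [congruence|].
        eapply H2; eauto.
      * eapply IH; eauto.
Qed.

Definition prefix (p b : sq) := exists y, sq_conc p y = b.

Lemma not_prefix G a b : AX G -> ~ prefix a (Sq b) ->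
  nd G (Ex (Eq (tconc (num a) (var 0)) (numl b))) -> nd G Fal.
Proof.
  revert G. induction b as [|c b IH] using rev_ind; intros G HA Hp H;
  (eapply ndExE with (psi := Fal); [exact H|]); change (shift_f Fal) with Fal;
  (match goal with |- nd (?E :: map shift_f G) _ => assert (HA1 : AX (E :: map shift_f G)) by (apply AX_cons, AX_shift; auto) end);
  (eapply elim5; [exact HA1| | ]).
  - apply (num_neq a (Sq [])).
    { intro E; apply Hp; exists (Sq []). subst. reflexivity. }
    { apply AX_cons; auto. }
    eapply eq_trans; [apply eq_sym, ax3; apply AX_cons; auto|].
    eapply eq_trans; [apply cong_conc; [apply refl'| apply eq_sym, ndA; left; reflexivity]|].
    apply ndA; right; left; reflexivity.
  - cbn [shift_t subst_term]. apply (ax1 _ (tconc (num a) (var 1)) (var 0)); [apply AX2; auto|].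
    eapply eq_trans; [apply eq_sym, ax4; apply AX2; auto|].
    eapply eq_trans; [apply cong_conc; [apply refl'| apply eq_sym, ndA; left; reflexivity]|].
    eapply nd_conv; [apply ndA, In_shift2; left; reflexivity|].
    shsimp. reflexivity.
  - apply (num_neq a (Sq (b ++ [c]))).
    { intro E; apply Hp; exists (Sq []). subst. simpl. rewrite app_nil_r. reflexivity. }
    { apply AX_cons; auto. }
    eapply eq_trans; [apply eq_sym, ax3; apply AX_cons; auto|].
    eapply eq_trans; [apply cong_conc; [apply refl'| apply eq_sym, ndA; left; reflexivity]|].
    apply ndA; right; left; reflexivity.
  - cbn [shift_t subst_term]. set (G4 := Eq (var 2) (tturn (var 1) (var 0)) :: _).
    assert (HA4 : AX G4) by (apply AX2; auto).
    assert (E : nd G4 (Eq (tturn (tconc (num a) (var 1)) (var 0)) (tturn (numl b) (num c)))).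
    { eapply eq_trans; [apply eq_sym, ax4; auto|].
      eapply eq_trans; [apply cong_conc; [apply refl'| apply eq_sym, ndA; left; reflexivity]|].
      eapply nd_conv; [apply ndA, In_shift2; left; reflexivity|].
      shsimp. rewrite numl_snoc. reflexivity. }
    apply ax2 in E as [E1 _]; auto.
    apply (IH G4 HA4).
    { intros [y Hy]; apply Hp. destruct a as [la], y as [ly]. exists (Sq (ly ++ [c])).
      simpl in *. injection Hy as Hy. rewrite app_assoc, Hy. reflexivity. }
    apply ndExI with (t := var 1). eapply nd_conv; [exact E1|].
    shsimp. reflexivity.
Qed.

Definition Disj (x : term) (ps : list sq) : form :=
  fold_right (fun p acc => Or (Eq x (num p)) acc) Fal ps.

Lemma subst_Disj sigma x ps : subst_form sigma (Disj x ps) = Disj (subst_term sigma x) ps.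
Proof. induction ps; simpl; [reflexivity|]. rewrite IHps, num_closed. reflexivity. Qed.

Lemma shift_Disj x ps : shift_f (Disj x ps) = Disj (shift_t x) ps.
Proof. apply subst_Disj. Qed.

Lemma Disj_elim ps : forall G x psi, nd G (Disj x ps) ->
  (forall p, In p ps -> nd (Eq x (num p) :: G) psi) -> nd G psi.
Proof.
  induction ps as [|p ps IH]; intros G x psi H K; simpl in H.
  - apply ndExp; auto.
  - eapply ndDE; [exact H| apply K; left; reflexivity|].
    eapply IH; [apply ndA; left; reflexivity|].
    intros q Hq. eapply weak; [apply K; right; exact Hq|].
    apply incl_cons; [left; reflexivity| apply incl_tl, incl_tl, incl_refl].
Qed.

Lemma prefix_disj b : exists ps, (forall p, In p ps -> prefix p (Sq b)) /\
  forall G x, AX G -> nd G (Ex (Eq (tconc (shift_t x) (var 0)) (numl b))) -> nd G (Disj x ps).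
Proof.
  induction b as [|c b IH] using rev_ind.
  - exists [Sq []]. split.
    { intros p [<-|[]]. exists (Sq []). reflexivity. }
    intros G x HA H. eapply ndExE; [exact H|].
    match goal with |- nd (?E :: map shift_f G) _ => assert (HA1 : AX (E :: map shift_f G)) by (apply AX_cons, AX_shift; auto) end.
    rewrite shift_Disj.
    eapply elim5; [exact HA1| |].
    + simpl. apply ndDI1.
      eapply eq_trans; [apply eq_sym, ax3; apply AX_cons; auto|].
      eapply eq_trans; [apply cong_conc; [apply refl'| apply eq_sym, ndA; left; reflexivity]|].
      apply ndA; right; left; reflexivity.
    + apply ndExp. cbn [shift_t subst_term].
      apply (ax1 _ (tconc (shift_t (shift_t (shift_t x))) (var 1)) (var 0)); [apply AX2; auto|].
      eapply eq_trans; [apply eq_sym, ax4; apply AX2; auto|].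
      eapply eq_trans; [apply cong_conc; [apply refl'| apply eq_sym, ndA; left; reflexivity]|].
      eapply nd_conv; [apply ndA, In_shift2; left; reflexivity|].
      shsimp. reflexivity.
  - destruct IH as [ps [Hps IH]].
    exists (Sq (b ++ [c]) :: ps). split.
    { intros p [<-|Hp].
      - exists (Sq []). simpl. rewrite app_nil_r. reflexivity.
      - destruct (Hps p Hp) as [[ly] Hy]. exists (Sq (ly ++ [c])). destruct p as [lp].
        simpl in *. injection Hy as Hy. rewrite app_assoc, Hy. reflexivity. }
    intros G x HA H. eapply ndExE; [exact H|].
    match goal with |- nd (?E :: map shift_f G) _ => assert (HA1 : AX (E :: map shift_f G)) by (apply AX_cons, AX_shift; auto) end.
    rewrite shift_Disj.
    eapply elim5; [exact HA1| |].
    + simpl. apply ndDI1.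
      eapply eq_trans; [apply eq_sym, ax3; apply AX_cons; auto|].
      eapply eq_trans; [apply cong_conc; [apply refl'| apply eq_sym, ndA; left; reflexivity]|].
      apply ndA; right; left; reflexivity.
    + rewrite !shift_Disj.
      set (x3 := shift_t (shift_t (shift_t x))).
      cbn [shift_t subst_term]. set (G4 := Eq (var 2) (tturn (var 1) (var 0)) :: _).
      assert (HA4 : AX G4) by (apply AX2; auto).
      assert (E : nd G4 (Eq (tturn (tconc x3 (var 1)) (var 0)) (tturn (numl b) (num c)))).
      { eapply eq_trans; [apply eq_sym, ax4; auto|].
        eapply eq_trans; [apply cong_conc; [apply refl'| apply eq_sym, ndA; left; reflexivity]|].
        eapply nd_conv; [apply ndA, In_shift2; left; reflexivity|].
        shsimp. rewrite numl_snoc. reflexivity. }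
      apply ax2 in E as [E1 _]; auto.
      simpl. apply ndDI2. apply IH; auto.
      apply ndExI with (t := var 1). eapply nd_conv; [exact E1|].
      unfold inst. cbn [subst_form]. cbn [subst_term]. rewrite inst_shift_t, numl_closed. reflexivity.
Qed.

Lemma sat_sqsub rho s t : sat rho (sqsub s t) <-> exists y, sq_conc (eval rho s) y = eval rho t.
Proof.
  unfold sqsub. cbn [sat eval]. split; intros [y Hy]; exists y; rewrite !eval_shift in *; exact Hy.
Qed.

Lemma up_shift_nsub rho s : subst_term (up (nsub rho)) (shift_t s) = subst_term (nsub rho) s.
Proof.
  unfold shift_t; rewrite subst_term_comp; apply subst_term_ext; intro n. simpl. unfold nsub. apply num_closed.
Qed.

Lemma subst_sqsub rho s t : subst_form (nsub rho) (sqsub s t) =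
  Ex (Eq (tconc (subst_term (nsub rho) s) (var 0)) (subst_term (nsub rho) t)).
Proof. unfold sqsub; cbn [subst_form subst_term]. rewrite !up_shift_nsub. reflexivity. Qed.

Lemma subst_ball rho t phi : subst_form (nsub rho) (ball t phi) =
  All (Imp (Ex (Eq (tconc (var 1) (var 0)) (subst_term (nsub rho) t))) (subst_form (up (nsub rho)) phi)).
Proof.
  unfold ball, sqsub; cbn [subst_form subst_term]. f_equal. f_equal. f_equal. f_equal.
  unfold shift_t. rewrite !subst_term_comp. apply subst_term_ext. intro n. simpl. unfold nsub.
  rewrite !num_closed. reflexivity.
Qed.

Lemma main phi : Sigma phi -> forall rho G, AX G -> sat rho phi -> nd G (subst_form (nsub rho) phi).
Proof.
  induction 1; intros rho G HA Hs.
  - cbn [sat] in Hs. cbn [subst_form].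
    eapply eq_trans; [apply term_num; auto|]. rewrite Hs. apply eq_sym, term_num; auto.
  - unfold Neg in *. cbn [sat] in Hs. cbn [subst_form]. apply ndII.
    assert (HA1 : AX (Eq (subst_term (nsub rho) s) (subst_term (nsub rho) t) :: G)) by (apply AX_cons; auto).
    apply (num_neq (eval rho s) (eval rho t) Hs _ HA1).
    eapply eq_trans; [apply eq_sym, term_num; auto|].
    eapply eq_trans; [apply ndA; left; reflexivity|]. apply term_num; auto.
  - rewrite subst_sqsub. apply sat_sqsub in Hs as [y Hy].
    pose proof (term_num G rho s HA) as Ts; pose proof (term_num G rho t HA) as Tt.
    apply ndExI with (t := num y).
    eapply nd_conv with (a := Eq (tconc (subst_term (nsub rho) s) (num y)) (subst_term (nsub rho) t)).
    2:{ unfold inst; cbn [subst_form subst_term scons]. rewrite !nsub_closed. reflexivity. }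
    rewrite <- Hy in Tt. destruct (eval rho s) as [ls], y as [ly]. cbn [sq_conc] in Tt. rewrite !num_Sq in *.
    eapply eq_trans; [apply cong_conc; [exact Ts| apply refl']|].
    eapply eq_trans; [apply conc_num'; auto|]. apply eq_sym; exact Tt.
  - unfold Neg in *. change (sat rho (sqsub s t) -> False) in Hs. rewrite sat_sqsub in Hs.
    cbn [subst_form]. rewrite subst_sqsub. apply ndII.
    eapply ndExE with (psi := Fal); [apply ndA; left; reflexivity|]. change (shift_f Fal) with Fal.
    match goal with |- nd (?E :: map shift_f ?G0) _ => assert (HA1 : AX (E :: map shift_f G0)) by (apply AX_cons, AX_shift, AX_cons; auto) end.
    pose proof (term_num _ rho s HA1) as Ts; pose proof (term_num _ rho t HA1) as Tt.
    destruct (eval rho s) as [ls], (eval rho t) as [lt]. rewrite !num_Sq in *.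
    apply (not_prefix _ (Sq ls) lt HA1); [exact Hs|].
    apply ndExI with (t := var 0).
    eapply nd_conv with (a := Eq (tconc (numl ls) (var 0)) (numl lt)).
    2:{ shsimp. reflexivity. }
    eapply eq_trans; [apply cong_conc; [apply eq_sym, Ts| apply refl']|].
    eapply eq_trans; [apply ndA; left; reflexivity|]. exact Tt.
  - cbn [sat] in Hs. destruct Hs. cbn [subst_form]. apply ndCI; auto.
  - cbn [sat] in Hs. cbn [subst_form]. destruct Hs; [apply ndDI1| apply ndDI2]; auto.
  - cbn [sat] in Hs. destruct Hs as [x Hx]. cbn [subst_form].
    apply ndExI with (t := num x).
    eapply nd_conv; [apply (IHSigma (scons x rho)); eauto|].
    rewrite inst_up. apply subst_form_ext. intros [|n]; reflexivity.
  - rewrite subst_ball. apply ndAllI. apply ndII.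
    match goal with |- nd (?E :: map shift_f ?G0) _ => assert (HA1 : AX (E :: map shift_f G0)) by (apply AX_cons, AX_shift; auto) end.
    pose proof (term_num _ rho t HA1) as Tt.
    destruct (eval rho t) as [lt] eqn:Et. rewrite num_Sq in Tt.
    destruct (prefix_disj lt) as [ps [Hps Hd]].
    apply (Disj_elim ps _ (var 0)).
    + apply Hd; [exact HA1|].
      eapply nd_conv; [apply (ndLeib _ (Ex (Eq (tconc (var 2) (var 0)) (var 1))) _ _ Tt)|].
      * eapply nd_conv; [apply ndA; left; reflexivity|].
        unfold inst; cbn [subst_form subst_term up scons]. rewrite nsub_closed. reflexivity.
      * unfold inst; cbn [subst_form subst_term up scons]. rewrite numl_closed. reflexivity.
    + intros p Hp.
      assert (HA2 : AX (Eq (var 0) (num p) :: _)) by (apply AX_cons; exact HA1).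
      assert (Sp : sat (scons p rho) phi).
      { cbn [sat] in Hs. apply (Hs p). apply sat_sqsub. cbn [eval scons]. rewrite eval_shift, Et.
        apply Hps; exact Hp. }
      pose proof (IHSigma (scons p rho) _ HA2 Sp) as IH.
      eapply nd_conv; [apply (ndLeib _ (subst_form (up (nsub rho)) phi) (num p) (var 0))|].
      * apply eq_sym, ndA; left; reflexivity.
      * eapply nd_conv; [exact IH|]. rewrite inst_up. apply subst_form_ext. intros [|n]; reflexivity.
      * rewrite inst_up. apply subst_form_ext. intros [|n]; [reflexivity|].
        cbn [scons up]. unfold nsub. symmetry. apply num_closed.
Qed.

Theorem corollary1 : forall phi : form,
  Sigma phi -> sentence phi -> S_models phi -> Seq_proves phi.
Proof.
  intros phi HS Hb Hm.
  exists [Seq1; Seq2; Seq3; Seq4; Seq5]. split.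
  - intros psi Hp. simpl in Hp. unfold Seq_axiom. intuition.
  - pose proof (main phi HS (fun _ => sq_e) _ AX_A (Hm _)) as H.
    rewrite (bounded_subst phi 0) in H; [exact H| exact Hb| intros k Hk; lia].
Qed.
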